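(* Consider the Floer triple $(\mathcal{C},f,m)$ over $\mathbb{Z}$ with $\mathcal{C}=\{\overline{c}_n:n\ge0\}\cup\{\underline{c}_n:n\ge1\}$, $f(\overline{c}_n)=-n$, $f(\underline{c}_n)=-n-1$, and whose only nonzero values of $m$ are $m(\underline{c}_n,\overline{c}_{n-1})=1$ and $m(\underline{c}_n,\overline{c}_n)=-2$ for $n\ge1$. Then, computing with integer coefficients, $\overline{HM}=\varinjlim_{b\to\infty}\varprojlim_{a\to-\infty}HM_a^b=0$, whereas the Novikov homology $HM\neq0$. In particular $HM$ and $\overline{HM}$ are not isomorphic.
   Context: A Floer triple over $\mathbb{Z}$: a set $\mathcal{C}$, $f\colon\mathcal{C}\to\mathbb{R}$, $m\colon\mathcal{C}\times\mathcal{C}\to\mathbb{Z}$ with (i) $\mathcal{C}_a^b=\{c: a\le f(c)\le b\}$ finite for all $a\le b$; (ii) $m(c_1,c_2)\ne0\Rightarrow f(c_1)<f(c_2)$; (iii) $\sum_{c_2}m(c_1,c_2)m(c_2,c_3)=0$ for all $c_1,c_3$. $CM_a^b$ is the free abelian group on $\mathcal{C}_a^b$ (zero if $a>b$), $\partial_a^b c=\sum_{c'\in\mathcal{C}_a^b}m(c',c)c'$, $HM_a^b$ its homology. For $a_1\le a_2$, $p^b_{a_2,a_1}\colon CM^b_{a_1}\to CM^b_{a_2}$ sends $c\mapsto c$ if $f(c)\ge a_2$ and to $0$ otherwise; for $b_1\le b_2$, $i_a^{b_2,b_1}$ is the inclusion; $Hp,Hi$ are the induced maps. $\varprojlim_a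 HM_a^b$ is the group of families $(x_a)_{a}$ with $Hp^b_{a_2,a_1}x_{a_1}=x_{a_2}$; the direct limit over $b$ is taken with respect to the maps induced componentwise by $Hi$. The Novikov complex consists of formal sums $\sum_{c}\gamma_c c$, $\gamma_c\in\mathbb{Z}$, with $\{c:\gamma_c\ne0,f(c)>b\}$ finite for all $b$, and $\partial\sum\gamma_c c=\sum_c\gamma_c\sum_{c'}m(c',c)c'$; $HM$ is its homology. *)

(* Defs.v *)
From Stdlib Require Import Reals ZArith List.
Import ListNotations.

Record FloerData := {
  fc : Type;
  ff : fc -> R;
  fm : fc -> fc -> Z
}.

Definition HasSum {C : Type} (g : C -> Z) (s : Z) : Prop :=
  exists l : list C, NoDup l /\ (forall c, g c <> 0%Z -> In c l) /\
    s = fold_right (fun c acc => (g c + acc)%Z) 0%Z l.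

Section Floer.
Variable T : FloerData.
Local Notation C := (fc T).
Local Notation f := (ff T).
Local Notation m := (fm T).

Definition is_floer_triple : Prop :=
  (forall a b : R, (a <= b)%R ->
     exists l : list C, forall c, In c l <-> (a <= f c <= b)%R)
  /\ (forall c1 c2, m c1 c2 <> 0%Z -> (f c1 < f c2)%R)
  /\ (forall c1 c3, HasSum (fun c2 => (m c1 c2 * m c2 c3)%Z) 0%Z).

Definition inW (a b : R) (c : C) : Prop := (a <= f c <= b)%R.

(* elements of CM_a^b, as coefficient functions supported in C_a^b *)
Definition chain (a b : R) (x : C -> Z) : Prop :=
  forall c, x c <> 0%Z -> inW a b c.

Definition bdry (a b : R) (x y : C -> Z) : Prop :=
  forall c', (inW a b c' -> HasSum (fun c => (m c' c * x c)%Z) (y c'))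
          /\ (~ inW a b c' -> y c' = 0%Z).

Definition cycle (a b : R) (z : C -> Z) : Prop :=
  chain a b z /\ bdry a b z (fun _ => 0%Z).

Definition homologous (a b : R) (z1 z2 : C -> Z) : Prop :=
  exists w, chain a b w /\ bdry a b w (fun c => (z1 c - z2 c)%Z).

Definition proj (a2 : R) (x : C -> Z) : C -> Z :=
  fun c => if Rle_dec a2 (f c) then x c else 0%Z.

(* a family of cycle representatives defining an element of
   lim_{<- a} HM_a^b *)
Definition invlim_elt (b : R) (z : R -> C -> Z) : Prop :=
  (forall a, cycle a b (z a)) /\
  (forall a1 a2, (a1 <= a2)%R -> homologous a2 b (proj a2 (z a1)) (z a2)).

(* \overline{HM} = lim_{-> b} lim_{<- a} HM_a^b is zero: every element,
   represented at stage b, becomes zero at some later stage b'. *)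
Definition HMbar_trivial : Prop :=
  forall (b : R) (z : R -> C -> Z), invlim_elt b z ->
    exists b', (b <= b')%R /\ forall a, homologous a b' (z a) (fun _ => 0%Z).

Definition novikov (x : C -> Z) : Prop :=
  forall b : R, exists l : list C, forall c, x c <> 0%Z -> (b < f c)%R -> In c l.

Definition nov_bdry (x y : C -> Z) : Prop :=
  forall c', HasSum (fun c => (m c' c * x c)%Z) (y c').

Definition nov_cycle (z : C -> Z) : Prop := novikov z /\ nov_bdry z (fun _ => 0%Z).

Definition nov_boundary (z : C -> Z) : Prop := exists w, novikov w /\ nov_bdry w z.

Definition HM_nontrivial : Prop := exists z, nov_cycle z /\ ~ nov_boundary z.

End Floer.

(* The concrete example. [Over n] is \overline{c}_n (n >= 0) and
   [Under n] is \underline{c}_{n+1} (index shifted so that n ranges over nat). *)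
Inductive exC : Type := Over (n : nat) | Under (n : nat).

Definition ex_f (c : exC) : R :=
  match c with
  | Over n => (- INR n)%R
  | Under n => (- INR (S n) - 1)%R
  end.

Definition ex_m (c1 c2 : exC) : Z :=
  match c1, c2 with
  | Under n, Over k =>
      if Nat.eqb k n then 1%Z else if Nat.eqb k (S n) then (-2)%Z else 0%Z
  | _, _ => 0%Z
  end.

Definition ex_triple : FloerData := {| fc := exC; ff := ex_f; fm := ex_m |}.

(* Main.v *)
Require Import Defs.
From Stdlib Require Import Reals ZArith List Lra Lia.
Import ListNotations.

Lemma arch_nat (r : R) : exists N : nat, (r < INR N)%R.
Proof.
  destruct (archimed r) as [H1 _].
  destruct (Z_lt_le_dec (up r) 0) as [Hn|Hp].
  - exists 0%nat. simpl. apply IZR_lt in Hn. lra.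
  - exists (Z.to_nat (up r)). rewrite INR_IZR_INZ, Z2Nat.id by exact Hp. lra.
Qed.

Lemma exC_eq_dec (x y : exC) : {x = y} + {x <> y}.
Proof. decide equality; apply Nat.eq_dec. Qed.

Lemma fold_pair (g : exC -> Z) (x y : exC) (l : list exC) :
  x <> y -> (forall c, c <> x -> c <> y -> g c = 0%Z) -> NoDup l ->
  fold_right (fun c acc => (g c + acc)%Z) 0%Z l =
  ((if in_dec exC_eq_dec x l then g x else 0) +
   (if in_dec exC_eq_dec y l then g y else 0))%Z.
Proof.
  intros Hxy Hg Hnd. induction Hnd as [|c l Hc Hnd IH]; [reflexivity|].
  simpl fold_right. rewrite IH.
  destruct (exC_eq_dec c x) as [->|Hcx].
  - destruct (in_dec exC_eq_dec x l) as [ix|nx]; [contradiction|].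
    destruct (in_dec exC_eq_dec x (x :: l)) as [_|nn]; [|exfalso; apply nn; left; auto].
    destruct (in_dec exC_eq_dec y l) as [i|n];
    destruct (in_dec exC_eq_dec y (x :: l)) as [i'|n'].
    + lia.
    + exfalso; apply n'; right; auto.
    + destruct i' as [e|e]; [congruence|contradiction].
    + lia.
  - destruct (exC_eq_dec c y) as [->|Hcy].
    + destruct (in_dec exC_eq_dec y l) as [iy|ny]; [contradiction|].
      destruct (in_dec exC_eq_dec y (y :: l)) as [_|nn]; [|exfalso; apply nn; left; auto].
      destruct (in_dec exC_eq_dec x l) as [i|n];
      destruct (in_dec exC_eq_dec x (y :: l)) as [i'|n'].
      * lia.
      * exfalso; apply n'; right; auto.
      * destruct i' as [e|e]; [congruence|contradiction].
      * lia.
    + rewrite (Hg c Hcx Hcy).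
      destruct (in_dec exC_eq_dec x l) as [i|n];
      destruct (in_dec exC_eq_dec x (c :: l)) as [i'|n'];
      destruct (in_dec exC_eq_dec y l) as [j|m];
      destruct (in_dec exC_eq_dec y (c :: l)) as [j'|m'];
      try lia;
      try (exfalso; apply n'; right; assumption);
      try (exfalso; apply m'; right; assumption);
      try (destruct i' as [e|e]; [congruence|contradiction]);
      try (destruct j' as [e|e]; [congruence|contradiction]).
Qed.

Lemma hassum_pair (g : exC -> Z) (x y : exC) (s : Z) :
  x <> y -> (forall c, c <> x -> c <> y -> g c = 0%Z) -> HasSum g s ->
  s = (g x + g y)%Z.
Proof.
  intros Hxy Hg [l [Hnd [Hsup ->]]]. rewrite (fold_pair g x y l Hxy Hg Hnd).
  destruct (in_dec exC_eq_dec x l) as [i|n];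
  destruct (in_dec exC_eq_dec y l) as [j|m]; try lia.
  - assert (g y = 0%Z) by (destruct (Z.eq_dec (g y) 0); [auto| exfalso; apply m, Hsup; auto]). lia.
  - assert (g x = 0%Z) by (destruct (Z.eq_dec (g x) 0); [auto| exfalso; apply n, Hsup; auto]). lia.
  - assert (g y = 0%Z) by (destruct (Z.eq_dec (g y) 0); [auto| exfalso; apply m, Hsup; auto]).
    assert (g x = 0%Z) by (destruct (Z.eq_dec (g x) 0); [auto| exfalso; apply n, Hsup; auto]). lia.
Qed.

Lemma hassum_zero_val (g : exC -> Z) (s : Z) :
  (forall c, g c = 0%Z) -> HasSum g s -> s = 0%Z.
Proof.
  intros Hg H. rewrite (hassum_pair g (Over 0) (Over 1) s) by (auto; congruence).
  rewrite !Hg. reflexivity.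
Qed.

Lemma hassum_zero (g : exC -> Z) : (forall c, g c = 0%Z) -> HasSum g 0%Z.
Proof.
  intros Hg. exists []. split; [constructor|split; [|reflexivity]].
  intros c H. exfalso. apply H, Hg.
Qed.

Lemma hassum_two (g : exC -> Z) (x y : exC) :
  x <> y -> (forall c, c <> x -> c <> y -> g c = 0%Z) -> HasSum g (g x + g y)%Z.
Proof.
  intros Hxy Hg. exists [x; y]. repeat split.
  - constructor; [intros [e|[]]; congruence|constructor; [intros []|constructor]].
  - intros c Hc. destruct (exC_eq_dec c x) as [->|]; [left; auto|].
    destruct (exC_eq_dec c y) as [->|]; [right; left; auto|].
    exfalso; apply Hc, Hg; auto.
  - simpl. lia.
Qed.

Lemma m_over (k : nat) (c : exC) : ex_m (Over k) c = 0%Z.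
Proof. destruct c; reflexivity. Qed.

Lemma m_under_supp (j : nat) (c : exC) :
  c <> Over j -> c <> Over (S j) -> ex_m (Under j) c = 0%Z.
Proof.
  intros H1 H2. destruct c as [k|k]; [|reflexivity]. simpl.
  destruct (Nat.eqb_spec k j); [subst; congruence|].
  destruct (Nat.eqb_spec k (S j)); [subst; congruence|reflexivity].
Qed.

Lemma m_under_1 (j : nat) : ex_m (Under j) (Over j) = 1%Z.
Proof. simpl. rewrite Nat.eqb_refl. reflexivity. Qed.

Lemma m_under_2 (j : nat) : ex_m (Under j) (Over (S j)) = (-2)%Z.
Proof.
  cbn [ex_m]. destruct (Nat.eqb_spec (S j) j); [lia|]. rewrite Nat.eqb_refl. reflexivity.
Qed.

Lemma under_rel (w : exC -> Z) (j : nat) (s : Z) :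
  HasSum (fun c => (ex_m (Under j) c * w c)%Z) s ->
  s = (w (Over j) - 2 * w (Over (S j)))%Z.
Proof.
  intros H.
  assert (E := hassum_pair (fun c => (ex_m (Under j) c * w c)%Z) (Over j) (Over (S j)) s).
  rewrite E.
  - rewrite m_under_1, m_under_2. lia.
  - intro e; injection e; lia.
  - intros c H1 H2. rewrite m_under_supp by auto. reflexivity.
  - exact H.
Qed.

Lemma under_sum (w : exC -> Z) (j : nat) :
  HasSum (fun c => (ex_m (Under j) c * w c)%Z) (w (Over j) - 2 * w (Over (S j)))%Z.
Proof.
  pose proof (hassum_two (fun c => (ex_m (Under j) c * w c)%Z) (Over j) (Over (S j))) as H.
  cbv beta in H. rewrite m_under_1, m_under_2 in H.
  replace (w (Over j) - 2 * w (Over (S j)))%Z with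
    (1 * w (Over j) + -2 * w (Over (S j)))%Z by lia.
  apply H; [intro e; injection e; lia|]. intros c H1 H2. rewrite m_under_supp by auto. reflexivity.
Qed.

Lemma f_le0 (c : exC) : (ex_f c <= 0)%R.
Proof. destruct c as [n|n]; unfold ex_f; pose proof (pos_INR n); [lra|rewrite S_INR; lra]. Qed.

Lemma finite_windows (a b : R) :
  exists l : list exC, forall c, In c l <-> (a <= ex_f c <= b)%R.
Proof.
  destruct (arch_nat (- a)) as [N HN].
  exists (filter (fun c => if Rle_dec a (ex_f c) then if Rle_dec (ex_f c) b then true else false else false)
            (map Over (seq 0 N) ++ map Under (seq 0 N))).
  intros c. rewrite filter_In, in_app_iff, !in_map_iff. split.
  - intros [_ H]. destruct (Rle_dec a (ex_f c)); [|discriminate].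
    destruct (Rle_dec (ex_f c) b); [|discriminate]. lra.
  - intros [H1 H2]. split.
    + assert (Hn : forall n, (a <= - INR n)%R -> In n (seq 0 N)).
      { intros n Hn. apply in_seq. split; [lia|]. simpl.
        apply INR_lt. lra. }
      destruct c as [n|n]; unfold ex_f in H1.
      * left. exists n. split; [reflexivity|]. apply Hn. lra.
      * right. exists n. split; [reflexivity|]. apply Hn. rewrite S_INR in H1. lra.
    + destruct (Rle_dec a (ex_f c)); [|contradiction].
      destruct (Rle_dec (ex_f c) b); [reflexivity|contradiction].
Qed.

Lemma div_all_zero (n : Z) :
  (forall M : nat, exists q, n = (2 ^ (Z.of_nat M) * q)%Z) -> n = 0%Z.
Proof.
  intros H. destruct (H (Z.to_nat (Z.abs n))) as [q Hq].
  rewrite Z2Nat.id in Hq by lia.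
  pose proof (Z.pow_gt_lin_r 2 (Z.abs n) ltac:(lia) ltac:(lia)) as Hlt.
  destruct (Z.eq_dec q 0) as [->|Hq0]; [lia|].
  assert (Z.abs n = 2 ^ Z.abs n * Z.abs q)%Z.
  { rewrite Hq at 1. rewrite Z.abs_mul, Z.abs_eq; [reflexivity|].
    apply Z.pow_nonneg; lia. }
  nia.
Qed.

Lemma triple : is_floer_triple ex_triple.
Proof.
  unfold is_floer_triple; cbn [fc ff fm ex_triple]. split; [|split].
  - intros a b _. apply finite_windows.
  - intros c1 c2 H; destruct c1 as [n|n]; destruct c2 as [k|k]; try (exfalso; apply H; reflexivity).
    cbn [ex_m] in H. unfold ex_f.
    destruct (Nat.eqb k n) eqn:E1; [apply Nat.eqb_eq in E1; subst; rewrite S_INR; lra|].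
    destruct (Nat.eqb k (S n)) eqn:E2; [apply Nat.eqb_eq in E2; subst; lra|].
    exfalso; apply H; reflexivity.
  - intros c1 c3. apply hassum_zero. intros [k|k].
    + rewrite m_over. lia.
    + destruct c1; reflexivity.
Qed.

Lemma over_rel (b a1 : R) (y : exC -> Z) :
  cycle ex_triple a1 b y -> forall M k, (- INR k <= b)%R ->
  (a1 <= - INR (k + M) - 1)%R -> y (Over k) = (2 ^ (Z.of_nat M) * y (Over (k + M)))%Z.
Proof.
  intros [_ Hy] M. induction M as [|M IH]; intros k Hk Ha.
  - rewrite Nat.add_0_r. rewrite Z.mul_1_l. reflexivity.
  - destruct (Hy (Under k)) as [Hin _].
    assert (Hw : inW ex_triple a1 b (Under k)).
    { unfold inW; cbn [ff ex_triple ex_f]. rewrite S_INR.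
      rewrite plus_INR, S_INR in Ha. pose proof (pos_INR M). lra. }
    specialize (Hin Hw). apply under_rel in Hin.
    rewrite (IH (S k)) in Hin.
    + rewrite Nat.add_succ_r. rewrite Nat2Z.inj_succ, Z.pow_succ_r by lia.
      simpl Nat.add in Hin. lia.
    + rewrite S_INR. lra.
    + rewrite Nat.add_succ_l, <- Nat.add_succ_r. exact Ha.
Qed.

Lemma over_zero (b : R) (z : R -> exC -> Z) :
  invlim_elt ex_triple b z -> forall a k, z a (Over k) = 0%Z.
Proof.
  intros [Hc Hcomp] a k.
  destruct (Z.eq_dec (z a (Over k)) 0) as [e|Hne]; [exact e|].
  assert (Hw : inW ex_triple a b (Over k)) by (apply (proj1 (Hc a)); exact Hne).
  apply div_all_zero. intro M.
  set (a1 := Rmin a (- INR (k + M) - 1)).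
  destruct (Hcomp a1 a (Rmin_l _ _)) as [w [_ Hb]].
  destruct (Hb (Over k)) as [Hin _]. specialize (Hin Hw).
  apply hassum_zero_val in Hin; [|intro c; rewrite m_over; reflexivity].
  unfold proj in Hin. destruct (Rle_dec a (ff ex_triple (Over k))) as [_|Hn];
    [|exfalso; apply Hn; apply Hw].
  exists (z a1 (Over (k + M))).
  rewrite <- (over_rel b a1 (z a1) (Hc a1) M k).
  - lia.
  - apply Hw.
  - apply Rmin_r.
Qed.

Fixpoint gsum (y : exC -> Z) (k i : nat) : Z :=
  match k with 0 => 0%Z | S k' => (y (Under i) + 2 * gsum y k' (S i))%Z end.

Lemma gsum_supp (y : exC -> Z) k : forall i, gsum y k i <> 0%Z ->
  exists n, (i <= n)%nat /\ y (Under n) <> 0%Z.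
Proof.
  induction k as [|k IH]; intros i H; cbn [gsum] in H; [lia|].
  destruct (Z.eq_dec (y (Under i)) 0) as [e|e].
  - destruct (IH (S i)) as [n [Hn1 Hn2]]; [lia|]. exists n. split; [lia|auto].
  - exists i. split; auto.
Qed.

Lemma hmbar : HMbar_trivial ex_triple.
Proof.
  intros b z Hz. exists (Rmax b 0). split; [apply Rmax_l|]. intros a.
  pose proof (over_zero b z Hz a) as Hov.
  destruct Hz as [Hc _]. destruct (Hc a) as [Hch _].
  destruct (arch_nat (- a)) as [N HN].
  assert (HU : forall n, (N <= n)%nat -> z a (Under n) = 0%Z).
  { intros n Hn. destruct (Z.eq_dec (z a (Under n)) 0) as [e|e]; [exact e|].
    destruct (Hch _ e) as [H1 _]. cbn [ff ex_triple ex_f] in H1.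
    apply le_INR in Hn. rewrite S_INR in H1. lra. }
  set (w := fun c => match c with Over i => gsum (z a) (N - i) i | Under _ => 0%Z end).
  assert (Hrel : forall j, z a (Under j) = (w (Over j) - 2 * w (Over (S j)))%Z).
  { intro j. unfold w. destruct (le_lt_dec N j) as [Hj|Hj].
    - rewrite HU by exact Hj. replace (N - j)%nat with 0%nat by lia.
      replace (N - S j)%nat with 0%nat by lia. reflexivity.
    - replace (N - j)%nat with (S (N - S j)) by lia. simpl. lia. }
  exists w. split.
  - intros [i|i] Hi; [|exfalso; apply Hi; reflexivity].
    simpl in Hi. destruct (gsum_supp _ _ _ Hi) as [n [Hn1 Hn2]].
    destruct (Hch _ Hn2) as [H1 _]. cbn [ff ex_triple ex_f] in H1.
    unfold inW; cbn [ff ex_triple ex_f].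
    apply le_INR in Hn1. rewrite S_INR in H1. pose proof (pos_INR i).
    pose proof (Rmax_r b 0). lra.
  - intros [k|j]; split.
    + intros _. rewrite Hov, Z.sub_0_r. apply hassum_zero. intro c.
      cbn [fm ex_triple]. rewrite m_over. reflexivity.
    + intros _. rewrite Hov. reflexivity.
    + intros _. rewrite Z.sub_0_r, Hrel. apply under_sum.
    + intros Hn. destruct (Z.eq_dec (z a (Under j)) 0) as [e|e]; [lia|].
      exfalso. apply Hn. destruct (Hch _ e) as [H1 H2]. split; [exact H1|].
      pose proof (Rmax_l b 0). lra.
Qed.

Definition z0 (c : exC) : Z :=
  match c with Over _ => 0%Z | Under n => if Nat.even n then 1%Z else 0%Z end.

Lemma even_facts i : Nat.even (2 * i) = true /\ Nat.even (S (2 * i)) = false.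
Proof.
  induction i as [|i IH]; [split; reflexivity|].
  replace (2 * S i)%nat with (S (S (2 * i))) by lia. exact IH.
Qed.

Lemma hm_nontriv : HM_nontrivial ex_triple.
Proof.
  exists z0. split.
  - split.
    + intros b. destruct (finite_windows (Rmin b 0) 0) as [l Hl]. exists l.
      intros c _ Hb. apply Hl. cbn [ff ex_triple] in Hb. pose proof (f_le0 c).
      pose proof (Rmin_l b 0). lra.
    + intros [k|j]; apply hassum_zero; intros c; cbn [fm ex_triple].
      * rewrite m_over. reflexivity.
      * destruct c; [simpl; lia|reflexivity].
  - intros [w [_ Hw]].
    assert (Hrel : forall j, z0 (Under j) = (w (Over j) - 2 * w (Over (S j)))%Z).
    { intro j. apply under_rel. exact (Hw (Under j)). }
    assert (Key : forall i, (3 * w (Over 0) + 1 = 4 ^ (Z.of_nat i) * (3 * w (Over (2 * i)) + 1))%Z).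
    { induction i as [|i IH]; [change (Z.of_nat 0) with 0%Z; rewrite Z.pow_0_r, Z.mul_1_l; reflexivity|].
      destruct (even_facts i) as [E1 E2].
      pose proof (Hrel (2 * i)%nat) as R1. pose proof (Hrel (S (2 * i))) as R2.
      cbn [z0] in R1, R2. rewrite E1 in R1. rewrite E2 in R2.
      replace (S (S (2 * i))) with (2 * S i)%nat in R2 by lia.
      rewrite Nat2Z.inj_succ, Z.pow_succ_r by lia. rewrite IH. nia. }
    set (X := (3 * w (Over 0) + 1)%Z).
    pose proof (Key (Z.to_nat (Z.abs X))) as K. fold X in K.
    rewrite Z2Nat.id in K by lia.
    pose proof (Z.pow_gt_lin_r 4 (Z.abs X) ltac:(lia) ltac:(lia)) as Hlt.
    set (Y := (3 * w (Over (2 * Z.to_nat (Z.abs X))) + 1)%Z) in K.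
    assert (HY : Y <> 0%Z) by (unfold Y; lia).
    assert (Z.abs X = 4 ^ Z.abs X * Z.abs Y)%Z.
    { rewrite K at 1. rewrite Z.abs_mul, (Z.abs_eq (4 ^ _)); [reflexivity|].
      apply Z.pow_nonneg; lia. }
    nia.
Qed.

Theorem mainTheorem9 :
  is_floer_triple ex_triple /\ HMbar_trivial ex_triple /\ HM_nontrivial ex_triple.
Proof. split; [exact triple|split; [exact hmbar|exact hm_nontriv]]. Qed.
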